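(* Let $\Lambda$ be diagonal with entries in $[0,1]$, let $W,\tilde W\in\mathbb{R}^{n\times n}$ be row-stochastic, let $\beta\in\mathbb{R}^n$ with $\beta_i\in(0,1)$ for all $i$, and set $W^{(1)}=(I-[\beta])W$, $W^{(2)}=[\beta]\tilde W$. If $\rho(\Lambda W)<1$ or $\rho(\Lambda\tilde W)<1$, then the FJ-MM system $x(t+1)=\Lambda(W^{(1)}x(t)+W^{(2)}x(t-1))+(I-\Lambda)s$ is exponentially stable, equivalently $\rho(\Lambda(W^{(1)}+W^{(2)}))<1$.
   Context: $[\beta]$ denotes the diagonal matrix with diagonal entries $\beta_1,\dots,\beta_n$. $\rho$ denotes spectral radius. Exponential stability of the FJ-MM system means $\rho(\bar A_d)<1$ for $\bar A_d=\begin{pmatrix}0 & I\\ \Lambda W^{(2)} & \Lambda W^{(1)}\end{pmatrix}$. *)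

(* Defs.v *)
From HB Require Import structures.
From mathcomp Require Import all_boot all_order all_algebra.
From mathcomp Require Import complex.
Set Implicit Arguments. Unset Strict Implicit. Unset Printing Implicit Defensive.
Import Order.TTheory GRing.Theory Num.Theory.
Local Open Scope ring_scope.

(* Spectral radius < 1 for a real square matrix A: every (complex) eigenvalue,
   i.e. every complex root of the characteristic polynomial of A, has modulus < 1.
   (rho(A) = max |lambda| over this finite nonempty set when n > 0.) *)
Definition specrad_lt1 (R : rcfType) (n : nat) (A : 'M[R]_n) : Prop :=
  forall z : R[i], root (char_poly (map_mx (fun x => x%:C%C) A)) z -> `|z| < 1.

Definition row_stochastic (R : rcfType) (n : nat) (W : 'M[R]_n) : Prop :=
  (forall i j, 0 <= W i j) /\ (forall i, \sum_(j < n) W i j = 1).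

Definition FJMM_matrix (R : rcfType) (n : nat) (Lam W1 W2 : 'M[R]_n) : 'M[R]_(n + n) :=
  block_mx 0 1%:M (Lam *m W2) (Lam *m W1).

(* Main.v *)
Require Import Defs.
From HB Require Import structures.
From mathcomp Require Import all_boot all_order all_algebra.
From mathcomp Require Import complex.
From mathcomp Require Import fingroup perm.
Set Implicit Arguments. Unset Strict Implicit. Unset Printing Implicit Defensive.
Import Order.TTheory GRing.Theory Num.Theory.
Local Open Scope ring_scope.

Lemma closed_det (R : comNzRingType) n (N : 'M[R]_n) (S : {set 'I_n}) :
  S != set0 ->
  (forall i j, i \in S -> j \notin S -> N i j = 0) ->
  (forall i, i \in S -> \sum_(j in S) N i j = 0) -> \det N = 0.
Proof.
move=> /set0Pn [i1 i1S] Hout Hsum.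
have [j0 j0S j0max] := @arg_maxnP _ i1 (mem S) (fun j : 'I_n => val j) i1S.
have j0S' : j0 \in S := j0S.
pose E : 'M[R]_n := \matrix_(k, j) ((k == j) || ((j == j0) && (k \in S)))%:R.
have detE : \det E = 1.
  rewrite -det_tr det_trig.
    by rewrite big1 // => i _; rewrite !mxE eqxx.
  apply/is_trig_mxP => i j ltij; rewrite !mxE.
  have /negPf -> : j != i by rewrite neq_ltn ltij orbT.
  case: (i =P j0) => [ei0|] //=; case jS: (j \in S) => //.
  by move: (j0max j jS); rewrite /= -ei0 leqNgt ltij.
have : \det (N *m E) = 0.
  rewrite /determinant big1 // => s0 _; pose s := (s0 : 'S_n).
  have [i iS nz] : exists2 i : 'I_n, i \in S & (s i \notin S) || (s i == j0).
    apply/exists_inP; apply: contraT; rewrite negb_exists_in => /forall_inP H.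
    have sub : [set s x | x in S] \subset S :\ j0.
      apply/subsetP => y /imsetP [x xS ->]; move: (H x xS).
      by rewrite negb_or negbK in_setD1 andbC.
    move: (subset_leq_card sub); rewrite card_imset; last exact: perm_inj.
    by rewrite (cardsD1 j0 S) j0S' add1n ltnn.
  rewrite (bigD1 i) //= !mxE.
  have -> : \sum_j N i j * E j (s i) = 0.
    case/orP: nz => [siS | /eqP ->].
      rewrite (bigD1 (s i)) //= big1 ?addr0.
        by rewrite Hout // mul0r.
      move=> k /negPf kne; rewrite !mxE kne /=.
      by case: eqP siS => [->|_]; [rewrite j0S' | rewrite mulr0].
    transitivity (\sum_(j in S) N i j); last exact: Hsum i iS.
    rewrite (bigID (mem S)) /= [X in _ + X]big1 ?addr0.
      by apply: eq_bigr => k kS; rewrite !mxE kS eqxx andbT orbT mulr1.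
    move=> k kS; rewrite !mxE (negPf kS) andbF orbF.
    by case: eqP => [ekj|]; [rewrite ekj j0S' in kS | rewrite mulr0].
  by rewrite mul0r mulr0.
by rewrite det_mulmx detE mulr1.
Qed.
Lemma maxmod (R : rcfType) n (M : 'M[R]_n) (lam : 'I_n -> R) (a : 'I_n -> R) :
 (forall i j, 0 <= M i j) -> (forall i, \sum_j M i j = lam i) ->
 (forall i, lam i <= 1) ->
 (forall i, 0 <= a i) -> (exists i, a i != 0) ->
 (forall i, a i <= \sum_j M i j * a j) ->
 exists2 S : {set 'I_n}, S != set0 &
   forall i, i \in S -> lam i = 1 /\ forall j, 0 < M i j -> j \in S.
Proof.
move=> M0 Msum lam1 a0 [i1 ai1] Ha.
have [i0 _ i0max] := @arg_maxP _ _ _ i1 xpredT a isT.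
set m := a i0.
have m0 : 0 < m.
  by apply: lt_le_trans (i0max i1 isT); rewrite lt_def ai1 a0.
exists [set i | a i == m].
  by apply/set0Pn; exists i0; rewrite inE.
move=> i; rewrite inE => /eqP aim.
have H1 : m <= \sum_j M i j * a j by rewrite -aim.
have H2 : \sum_j M i j * a j <= lam i * m.
  rewrite -Msum mulr_suml; apply: ler_sum => j _.
  by apply: ler_wpM2l => //; apply: i0max.
have laml : lam i = 1.
  apply/eqP; rewrite eq_le lam1 /=.
  by rewrite -(ler_pM2r m0) mul1r (le_trans H1 H2).
have Hz : \sum_j M i j * (m - a j) = 0.
  apply/eqP; rewrite eq_le; apply/andP; split.
    rewrite (eq_bigr (fun j => M i j * m - M i j * a j)); last by move=> j _; rewrite mulrBr.
    rewrite sumrB -mulr_suml Msum laml mul1r subr_le0 //.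
  apply: sumr_ge0 => j _; apply: mulr_ge0 => //; rewrite subr_ge0; exact: i0max.
split => // j Mpos; rewrite inE; apply/eqP.
have Hge : forall k, xpredT k -> 0 <= M i k * (m - a k).
  move=> k _; apply: mulr_ge0 => //; rewrite subr_ge0; exact: i0max.
have /eqP := psumr_eq0P Hge Hz (isT : xpredT j).
by rewrite mulf_eq0 gt_eqF //= subr_eq0 => /eqP <-.
Qed.
Lemma root_det (F : fieldType) n (A : 'M[F]_n) z :
  root (char_poly A) z <-> \det (z%:M - A) = 0.
Proof.
rewrite -eigenvalue_root_char; split.
  move=> /eigenvalueP [v Av vnz]; apply/eqP/det0P; exists v => //.
  by rewrite mulmxBr Av mul_mx_scalar subrr.
move=> /eqP/det0P [v vnz Av]; apply/eigenvalueP; exists v => //.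
by apply/eqP; rewrite -mul_mx_scalar eq_sym -subr_eq0 -mulmxBr Av.
Qed.

Lemma right_eig (F : fieldType) n (A : 'M[F]_n) z :
  \det (z%:M - A) = 0 -> exists2 c : 'cV_n, c != 0 & A *m c = z *: c.
Proof.
rewrite -det_tr => /eqP/det0P [v vnz Hv]; exists v^T.
  by rewrite trmx_eq0.
apply/eqP; rewrite -subr_eq0 -mul_scalar_mx -mulmxBl -trmx_eq0 trmx_mul.
rewrite linearB /= tr_scalar_mx.
by rewrite trmxK -opprB mulmxN -(tr_scalar_mx n z) -linearB /= Hv oppr0.
Qed.

Lemma map_det_C (R : rcfType) n (A : 'M[R]_n) :
  \det (map_mx (fun x => x%:C%C) A) = (\det A)%:C%C.
Proof. exact: det_map_mx. Qed.

Lemma not_specrad (R : rcfType) n (lam : 'rV[R]_n) (P : 'M[R]_n) (S : {set 'I_n}) :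
  row_stochastic P -> S != set0 -> (forall i, i \in S -> lam 0 i = 1) ->
  (forall i j, i \in S -> 0 < P i j -> j \in S) ->
  ~ specrad_lt1 (diag_mx lam *m P).
Proof.
move=> [P0 P1] Sne lam1 Scl H.
have Pout : forall i j, i \in S -> j \notin S -> P i j = 0.
  move=> i j iS jS; apply/eqP; rewrite eq_le P0 andbT leNgt.
  by apply: contra jS; apply: Scl.
have Hdet : \det (1%:M - diag_mx lam *m P) = 0.
  apply: (closed_det Sne).
    move=> i j iS jS; rewrite mul_diag_mx !mxE Pout // mulr0 subr0.
    by case: eqP => // eij; rewrite -eij iS in jS.
  move=> i iS; rewrite mul_diag_mx.
  rewrite (eq_bigr (fun j => (i == j)%:R - P i j)); last first.
    by move=> j _; rewrite !mxE lam1 // mul1r.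
  rewrite sumrB.
  have -> : \sum_(j in S) P i j = 1.
    rewrite -(P1 i) [RHS](bigID (mem S)) /= [X in _ + X]big1 ?addr0 //.
    by move=> j jS; apply: Pout.
  rewrite (bigD1 i) //= eqxx big1 ?addr0 ?subrr // => j /andP [_ /negPf].
  by rewrite eq_sym => ->.
have : `|(1 : R[i])| < 1.
  apply: H; apply/root_det.
  have -> : (1 : R[i])%:M = map_mx (fun x : R => x%:C%C) (1%:M : 'M_n).
    by apply/matrixP=> p q; rewrite !mxE; case: (p == q).
  have -> : map_mx (fun x : R => x%:C%C) (1%:M : 'M_n) - map_mx (fun x : R => x%:C%C) (diag_mx lam *m P)
     = map_mx (fun x : R => x%:C%C) (1%:M - diag_mx lam *m P).
    by apply/matrixP=> p q; rewrite !mxE rmorphB.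
  by rewrite map_det_C Hdet.
by rewrite normr1 ltxx.
Qed.
Definition nrm (R : rcfType) (x : R[i]) : R := complex.Re (`|x| : R[i]).

Lemma normC_re (R : rcfType) (x : R[i]) : `|x| = (nrm x)%:C%C :> R[i].
Proof. by rewrite /nrm normc_def. Qed.

Lemma nrm_ge0 (R : rcfType) (x : R[i]) : 0 <= nrm x.
Proof. by rewrite -ler0c -normC_re. Qed.

Lemma nrm_eq0 (R : rcfType) (x : R[i]) : (nrm x == 0) = (x == 0).
Proof.
apply/eqP/eqP => [h|->]; last by rewrite /nrm normr0.
by apply/normr0_eq0; rewrite normC_re h.
Qed.

Lemma normsum (R : rcfType) n (M : 'I_n -> R) (x : 'I_n -> R[i]) :
  (forall j, 0 <= M j) ->
  `|\sum_j (M j)%:C%C * x j| <= (\sum_j M j * nrm (x j))%:C%C.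
Proof.
move=> M0; apply: le_trans (ler_norm_sum _ _ _) _.
rewrite rmorph_sum /=; apply: ler_sum => j _.
by rewrite normrM rmorphM /= -normC_re ger0_norm // ler0c.
Qed.

Lemma map1C (R : rcfType) n :
  map_mx (fun x : R => x%:C%C) (1%:M : 'M_n) = 1%:M.
Proof. by apply/matrixP=> p q; rewrite !mxE; case: (p == q). Qed.

Lemma map0C (R : rcfType) m n :
  map_mx (fun x : R => x%:C%C) (0 : 'M_(m, n)) = 0.
Proof. by apply/matrixP=> p q; rewrite !mxE. Qed.

Lemma mapMC_entry (R : rcfType) n (P : 'M[R]_n) (x : 'cV[R[i]]_n) i :
  (map_mx (fun x : R => x%:C%C) P *m x) i 0 = \sum_j (P i j)%:C%C * x j 0.
Proof. by rewrite !mxE; apply: eq_bigr => j _; rewrite mxE. Qed.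

Lemma ge1_of_not_lt1 (R : rcfType) (z : R[i]) : ~ `|z| < 1 -> 1 <= nrm z.
Proof.
have -> : (1 : R[i]) = (1 : R)%:C%C by [].
rewrite normC_re ltcR => h.
by rewrite leNgt; apply/negP.
Qed.

Lemma cV_nz (R : rcfType) n (x : 'cV[R[i]]_n) : x != 0 -> exists i, nrm (x i 0) != 0.
Proof.
move=> xnz; apply/existsP; apply: contraR xnz => /existsPn H.
apply/eqP/matrixP => i j; rewrite ord1 mxE; apply/eqP.
by rewrite -nrm_eq0; move: (H i); rewrite negbK.
Qed.

Unset Implicit Arguments. Set Strict Implicit. Set Printing Implicit Defensive.

Theorem corollary1 (R : rcfType) (n : nat) (lam : 'rV[R]_n) (W Wt : 'M[R]_n)
  (beta : 'rV[R]_n) :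
  (forall i, 0 <= lam 0 i <= 1) ->
  row_stochastic W -> row_stochastic Wt ->
  (forall i, 0 < beta 0 i < 1) ->
  let Lam := diag_mx lam in
  let W1 := (1%:M - diag_mx beta) *m W in
  let W2 := diag_mx beta *m Wt in
  specrad_lt1 (Lam *m W) \/ specrad_lt1 (Lam *m Wt) ->
  specrad_lt1 (FJMM_matrix Lam W1 W2) /\ specrad_lt1 (Lam *m (W1 + W2)).
Proof.
move=> lam01 HW HWt beta01 Lam W1 W2 Hyp.
have [W0 Ws] := HW; have [Wt0 Wts] := HWt.
have P1ij : forall i j, (Lam *m W1) i j = lam 0 i * ((1 - beta 0 i) * W i j).
  move=> i j; rewrite /Lam /W1 mul_diag_mx mxE mulmxBl mul1mx mul_diag_mx !mxE.
  by rewrite mulrBl mul1r.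
have P2ij : forall i j, (Lam *m W2) i j = lam 0 i * (beta 0 i * Wt i j).
  by move=> i j; rewrite /Lam /W2 mul_diag_mx mxE mul_diag_mx !mxE.
set M := Lam *m (W1 + W2).
have Mij : forall i j, M i j = (Lam *m W1) i j + (Lam *m W2) i j.
  by move=> i j; rewrite /M mulmxDr mxE.
have b0 : forall i, 0 <= beta 0 i by move=> i; case/andP: (beta01 i) => /ltW.
have b1 : forall i, 0 <= 1 - beta 0 i.
  by move=> i; case/andP: (beta01 i) => _ /ltW; rewrite subr_ge0.
have l0 : forall i, 0 <= lam 0 i by move=> i; case/andP: (lam01 i).
have P10 : forall i j, 0 <= (Lam *m W1) i j.
  by move=> i j; rewrite P1ij !mulr_ge0.
have P20 : forall i j, 0 <= (Lam *m W2) i j.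
  by move=> i j; rewrite P2ij !mulr_ge0.
have M0 : forall i j, 0 <= M i j by move=> i j; rewrite Mij addr_ge0.
have Msum : forall i, \sum_j M i j = lam 0 i.
  move=> i; rewrite (eq_bigr (fun j => lam 0 i * (1 - beta 0 i) * W i j
     + lam 0 i * beta 0 i * Wt i j)); last first.
    by move=> j _; rewrite Mij P1ij P2ij !mulrA.
  by rewrite big_split /= -!mulr_sumr Ws Wts !mulr1 -mulrDr subrK mulr1.
have final : forall a : 'I_n -> R, (forall i, 0 <= a i) -> (exists i, a i != 0) ->
    (forall i, a i <= \sum_j M i j * a j) -> False.
  move=> a a0 anz Ha.
  have [S Sne HS] := maxmod M0 Msum (fun i => proj2 (andP (lam01 i))) a0 anz Ha.
  have lS : forall i, i \in S -> lam 0 i = 1 by move=> i /HS [].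
  case: Hyp => Hyp.
    apply: (not_specrad HW Sne lS _ Hyp) => i j iS Wp.
    apply: (proj2 (HS i iS)); rewrite Mij P1ij lS // mul1r.
    have h1 : 0 < (1 - beta 0 i) * W i j.
      by rewrite mulr_gt0 // subr_gt0; case/andP: (beta01 i).
    by rewrite -[0](addr0 0) ltr_leD.
  apply: (not_specrad HWt Sne lS _ Hyp) => i j iS Wp.
  apply: (proj2 (HS i iS)); rewrite Mij P2ij lS // mul1r.
  have h1 : 0 < beta 0 i * Wt i j.
    by rewrite mulr_gt0 //; case/andP: (beta01 i).
  by rewrite -[0](addr0 0) ler_ltD.
split; last first.
  move=> z /root_det/right_eig [c cnz Hc].
  case: (boolP (`|z| < 1)) => // /negP /ge1_of_not_lt1 z1; exfalso.
  have [i0 ai0] := cV_nz cnz.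
  apply: (final (fun i => nrm (c i 0))) => //; first by move=> i; exact: nrm_ge0.
    by exists i0.
  move=> i; apply: (@le_trans _ _ (nrm z * nrm (c i 0))).
    by rewrite ler_peMl // nrm_ge0.
  rewrite -lecR rmorphM /= -!normC_re -normrM.
  have : (z *: c) i 0 = z * c i 0 by rewrite mxE.
  by move <-; rewrite -Hc mapMC_entry normsum.
move=> z /root_det/right_eig [c cnz Hc].
case: (boolP (`|z| < 1)) => // /negP /ge1_of_not_lt1 z1; exfalso.
move: Hc; rewrite -(vsubmxK c) /FJMM_matrix map_block_mx mul_block_col scale_col_mx.
rewrite map0C map1C mul0mx mul1mx add0r => /eq_col_mx [Hy Hx]; rewrite Hy in Hx.
move: cnz; rewrite -(vsubmxK c) Hy; set x := usubmx c => cnz.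
have xnz : x != 0 by apply: contraNneq cnz => ->; rewrite scaler0 col_mx0.
have [i0 ai0] := cV_nz xnz.
apply: (final (fun i => nrm (x i 0))); [by move=> i; exact: nrm_ge0 | by exists i0 |].
move=> i.
set r := nrm z; set a := nrm (x i 0).
set B1 := \sum_j (Lam *m W1) i j * nrm (x j 0).
set B2 := \sum_j (Lam *m W2) i j * nrm (x j 0).
have -> : \sum_j M i j * nrm (x j 0) = B1 + B2.
  by rewrite /B1 /B2 -big_split; apply: eq_bigr => j _; rewrite Mij mulrDl.
have Hi : r * (r * a) <= B2 + r * B1.
  rewrite -lecR !rmorphD !rmorphM /= /r /a -!normC_re -!normrM.
  have := congr1 (fun m : 'cV[R[i]]_n => m i 0) Hx; rewrite -scalemxAr mxE [in RHS]mxE [in RHS]mxE.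
  rewrite !mapMC_entry mxE => <-.
  apply: le_trans (ler_normD _ _) _; rewrite normrM.
  apply: lerD; first exact: normsum.
  by apply: ler_wpM2l => //; rewrite mapMC_entry; exact: normsum.
have B10 : 0 <= B1 by apply: sumr_ge0 => j _; rewrite mulr_ge0 // nrm_ge0.
have B20 : 0 <= B2 by apply: sumr_ge0 => j _; rewrite mulr_ge0 // nrm_ge0.
have r0 : 0 < r by apply: lt_le_trans z1.
have a0 : 0 <= a by exact: nrm_ge0.
have h : r * (r * a) <= r * (B1 + B2).
  apply: le_trans Hi _; rewrite mulrDr addrC lerD2l.
  by rewrite ler_peMl.
rewrite ler_pM2l // in h.
by apply: le_trans h; rewrite ler_peMl.
Qed.
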